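(* Let $m\ge 1$ be an integer and $S>1$. For $j=1,\ldots,2m$ put $\theta_j=\pi(j-1/2)/m$, \[ z_j=\frac{S e^{i\theta_j}+S^{-1}e^{-i\theta_j}}{S+S^{-1}},\qquad w_j=\frac{1}{2m}\,\frac{S e^{i\theta_j}-S^{-1}e^{-i\theta_j}}{S+S^{-1}}, \] and define the rational function $r_m^{(T)}(z)=\sum_{j=1}^{2m}\frac{w_j}{z_j-z}$. Let \[ \alpha=\frac{S^{2m}+S^{-2m}}{S^{2m}-S^{-2m}},\qquad \beta=\frac{2}{S^{2m}-S^{-2m}}. \] Then \[ r_m^{(T)}(z)=\frac{1}{\alpha+\beta\,T_{2m}\!\left(\frac{S+S^{-1}}{2}z\right)}=\frac{1}{(\alpha-\beta)+2\beta\,T_m\!\left(\frac{S+S^{-1}}{2}z\right)^2}, \] where $T_j(z)=\cos(j\arccos z)$ is the Chebyshev polynomial of the first kind of degree $j$. Consequently $r_m^{(T)}$ is a rational function of exact type $(0,2m)$ (numerator degree $0$, denominator degree $2m$), and on the interval $[-2/(S+S^{-1}),\,2/(S+S^{-1})]$ it equioscillates $2m+1$ times, alternating between the values $(\alpha+\beta)^{-1}$ and $(\alpha-\beta)^{-1}$.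
   Context: The function $r_m^{(T)}$ arises as the trapezoid-rule approximation, with $2m$ equispaced nodes in $\theta\in[0,2\pi)$, of the contour integral $\frac{1}{2\pi i}\int_{\Gamma_S}\frac{d\gamma}{\gamma-z}$ over the ellipse $\Gamma_S=\{\gamma(\theta)=\frac{Se^{i\theta}+S^{-1}e^{-i\theta}}{S+S^{-1}}:\theta\in[0,2\pi)\}$. A rational function is of type $(\mu,\nu)$ if it is a quotient of a polynomial of degree at most $\mu$ by a polynomial of degree at most $\nu$. *)

(* Defs.v *)
From mathcomp Require Import all_boot all_algebra.
From mathcomp Require Import reals trigo.
From mathcomp Require Export complex.
Set Implicit Arguments. Unset Strict Implicit. Unset Printing Implicit Defensive.
Import GRing.Theory Num.Theory.
Local Open Scope ring_scope.
Local Open Scope complex_scope.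

(* Chebyshev polynomials of the first kind, T_0 = 1, T_1 = X,
   T_(n+2) = 2 X T_(n+1) - T_n  (so T_n(cos t) = cos (n t)). *)
Fixpoint cheb (F : nzRingType) (n : nat) : {poly F} :=
  match n with
  | 0 => 1
  | 1 => 'X
  | S ((S n') as n1) => 2%:R *: 'X * cheb F n1 - cheb F n'
  end.

Section Defs.
Variable R : realType.

Definition expi (t : R) : R[i] := (cos t) +i* (sin t).

(* theta_{j+1} = pi ((j+1) - 1/2) / m = pi (2j+1)/(2m), j = 0, ..., 2m-1 *)
Definition theta (m j : nat) : R := pi * (2 * j + 1)%:R / (2 * m)%:R.

Definition znode (m : nat) (S : R) (j : nat) : R[i] :=
  (S%:C * expi (theta m j) + S^-1%:C * expi (- theta m j)) / (S + S^-1)%:C.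

Definition wnode (m : nat) (S : R) (j : nat) : R[i] :=
  ((2 * m)%:R^-1)%:C *
  ((S%:C * expi (theta m j) - S^-1%:C * expi (- theta m j)) / (S + S^-1)%:C).

Definition rT (m : nat) (S : R) (z : R[i]) : R[i] :=
  \sum_(j < 2 * m) wnode m S j / (znode m S j - z).

Definition alphaT (m : nat) (S : R) : R :=
  (S ^+ (2 * m) + S ^- (2 * m)) / (S ^+ (2 * m) - S ^- (2 * m)).

Definition betaT (m : nat) (S : R) : R :=
  2 / (S ^+ (2 * m) - S ^- (2 * m)).

Definition not_node (m : nat) (S : R) (z : R[i]) : Prop :=
  forall j : nat, (j < 2 * m)%N -> z <> znode m S j.

End Defs.

Definition exact_type (F : fieldType) (mu nu : nat) (f : F -> F) (D : F -> Prop) : Prop :=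
  exists p q : {poly F},
    [/\ size p = mu.+1, size q = nu.+1, coprimep p q &
        forall z, D z -> q.[z] != 0 /\ f z = p.[z] / q.[z]].

(* Main.v *)
Require Import Defs.
From mathcomp Require Import all_boot all_order all_algebra.
From mathcomp Require Import reals trigo complex.
From mathcomp Require Import ring lra.
Import Order.TTheory GRing.Theory Num.Theory.
Local Open Scope ring_scope.
Local Open Scope complex_scope.

Lemma chebSS (F : nzRingType) n : cheb F n.+2 = 2%:R *: 'X * cheb F n.+1 - cheb F n.
Proof. by []. Qed.

Section Cheb.
Variable F : numFieldType.

Lemma cheb_J (v : F) n : v != 0 ->
  (cheb F n).[(v + v^-1) / 2%:R] = (v ^+ n + (v ^+ n)^-1) / 2%:R.
Proof.
move=> v0.
have h2 : (2%:R : F) != 0 by rewrite pnatr_eq0.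
suff: (cheb F n).[(v + v^-1) / 2%:R] = (v ^+ n + (v ^+ n)^-1) / 2%:R /\
      (cheb F n.+1).[(v + v^-1) / 2%:R] = (v ^+ n.+1 + (v ^+ n.+1)^-1) / 2%:R by case.
elim: n => [|n [IH1 IH2]].
  split; first by rewrite /= hornerE expr0 invr1; field.
  by rewrite /= hornerX expr1.
split=> //.
rewrite chebSS hornerD hornerN hornerM hornerZ hornerX IH1 IH2 !exprS.
have vn : v ^+ n != 0 by rewrite expf_neq0.
field; rewrite ?vn ?v0 ?h2 //=. Qed.

Lemma cheb_dJ (v : F) n : v != 0 -> v - v^-1 != 0 ->
  (cheb F n)^`().[(v + v^-1) / 2%:R] = n%:R * (v ^+ n - (v ^+ n)^-1) / (v - v^-1).
Proof.
move=> v0 d0.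
have d1 : v * v - 1 != 0.
  move: d0; apply: contra => /eqP h; apply/eqP.
  have -> : v - v^-1 = (v * v - 1) / v by field.
  by rewrite h mul0r.
have h2 : (2%:R : F) != 0 by rewrite pnatr_eq0.
suff: (cheb F n)^`().[(v + v^-1) / 2%:R] = n%:R * (v ^+ n - (v ^+ n)^-1) / (v - v^-1) /\
      (cheb F n.+1)^`().[(v + v^-1) / 2%:R] = n.+1%:R * (v ^+ n.+1 - (v ^+ n.+1)^-1) / (v - v^-1) by case.
elim: n => [|n [IH1 IH2]].
  split; first by rewrite /= derivC hornerC mul0r mul0r.
  rewrite /= derivX hornerC expr1; field; rewrite ?d0 ?d1 ?v0 //.
split=> //.
rewrite chebSS derivB derivM derivZ derivX hornerD hornerN hornerD hornerM hornerM
  hornerZ hornerZ hornerX hornerC IH1 IH2 cheb_J // !exprS.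
have vn : v ^+ n != 0 by rewrite expf_neq0.
rewrite -[n.+2]addn2 -[n.+1]addn1 !natrD.
field; rewrite ?vn ?v0 ?h2 ?d0 ?d1 //=.
Qed.
End Cheb.

Section Expi.
Variable R : realType.

Lemma expiD (a b : R) : expi (a + b) = expi a * expi b.
Proof. rewrite /expi sinD cosD /=; apply/eqP; rewrite eq_complex /= !eqxx /=; apply/eqP; ring. Qed.

Lemma expi0 : expi (0 : R) = 1.
Proof. by rewrite /expi sin0 cos0. Qed.

Lemma expi_neq0 (t : R) : expi t != 0.
Proof.
apply/negP => /eqP h.
have := expiD t (- t); rewrite subrr expi0 h mul0r => /eqP; by rewrite oner_eq0.
Qed.

Lemma expiN (t : R) : expi (- t) = (expi t)^-1.
Proof.
have := expiD t (- t); rewrite subrr expi0 => h.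
by apply: (mulfI (expi_neq0 t)); rewrite -h mulfV // expi_neq0.
Qed.

Lemma expiX (t : R) n : expi t ^+ n = expi (n%:R * t).
Proof.
elim: n => [|n IH]; first by rewrite expr0 mul0r expi0.
by rewrite exprS IH -expiD -{1}(mul1r t) -mulrDl addrC -natr1.
Qed.

Lemma expipi : expi (pi : R) = -1.
Proof. rewrite /expi cospi sinpi; apply/eqP; by rewrite eq_complex /= oppr0 !eqxx. Qed.

Lemma expi_re (t : R) : expi t + expi (- t) = (2%:R * cos t)%:C.
Proof. rewrite /expi cosN sinN /=; apply/eqP; rewrite eq_complex /=; apply/andP; split; apply/eqP; ring. Qed.

Lemma expi_sin (t : R) : expi t = 1 -> sin t = 0.
Proof. by rewrite /expi => -[]. Qed.

Lemma rexpi1 (r t : R) : r%:C * expi t = 1 -> r ^+ 2 = 1.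
Proof.
move=> h.
have r0 : r != 0 by apply: contra_eq_neq h => ->; rewrite mul0r eq_sym oner_neq0.
have e : expi t = (r^-1)%:C.
  have rC : r%:C != 0 :> R[i] by rewrite eq_complex /= eqxx andbT.
  by rewrite fmorphV; apply: (mulfI rC); rewrite h mulfV.
move: e; rewrite /expi => -[e1 e2].
have := cos2Dsin2 t; rewrite e1 e2 expr0n /= addr0 => h2.
by rewrite -[r]invrK exprVn h2 invr1.
Qed.

Lemma sin_frac_gt0 (k m : nat) : (0 < k < m)%N -> 0 < sin (pi * k%:R / m%:R : R).
Proof.
case/andP => k0 km.
have m0 : (0 < m)%N by apply: leq_ltn_trans km.
have M0 : (0 : R) < m%:R by rewrite ltr0n.
have K0 : (0 : R) < k%:R by rewrite ltr0n.
have KM : (k%:R : R) < m%:R by rewrite ltr_nat.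
apply: sin_gt0_pi; apply/andP; split.
  by rewrite divr_gt0 // mulr_gt0 // pi_gt0.
by rewrite ltr_pdivrMr // ltr_pM2l // pi_gt0.
Qed.


Lemma omega_neq1 (d m : nat) : (0 < d < 2 * m)%N -> expi (pi * d%:R / m%:R : R) != 1.
Proof.
case/andP => d0 dm.
have m0 : (0 < m)%N by case: m dm => //; rewrite muln0.
have M0 : (m%:R : R) != 0 by rewrite pnatr_eq0 -lt0n.
case: (ltngtP d m) => hdm.
- apply/negP => /eqP /expi_sin; apply/eqP; rewrite gt_eqF //.
  by apply: sin_frac_gt0; rewrite d0.
- apply/negP => /eqP /expi_sin.
  have -> : (pi * d%:R / m%:R : R) = pi * (d - m)%:R / m%:R + pi.
    rewrite natrB; last exact: ltnW.
    move: (pi : R) => p. by field.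
  rewrite sinD cospi sinpi mulr0 addr0 mulrN1 => /eqP; rewrite oppr_eq0.
  have hs : 0 < sin (pi * (d - m)%:R / m%:R : R).
    apply: sin_frac_gt0; rewrite subn_gt0 hdm /=.
    by rewrite ltn_subLR ?addnn -?mul2n //; apply: ltnW.
  by rewrite (gt_eqF hs).
- rewrite hdm mulfK // expipi; apply/eqP => h.
  have : (1 + 1 : R[i]) == 0 by rewrite -{1}h addNr.
  by rewrite -[1 + 1]/(2%:R : R[i]) pnatr_eq0.
Qed.
End Expi.

Lemma size_cheb (F : numFieldType) n : size (cheb F n) = n.+1.
Proof.
have h2 : (2%:R : F) != 0 by rewrite pnatr_eq0.
suff : size (cheb F n) = n.+1 /\ size (cheb F n.+1) = n.+2 by case.
elim: n => [|n [IH1 IH2]].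
  by rewrite /= size_polyC oner_eq0 size_polyX.
split=> //.
rewrite chebSS -scalerAl mulrC size_addl size_scale // ?size_mulX ?IH2 //.
- by rewrite -size_poly_eq0 IH2.
- by rewrite size_opp IH1 ltnS ltnW.
by rewrite -size_poly_eq0 IH2.
Qed.

Section Nodes.
Variable R : realType.
Variables (m : nat) (S : R).
Hypotheses (m1 : (1 <= m)%N) (S1 : 1 < S).

Let SC : R[i] := S%:C.
Let uu j : R[i] := expi (theta R m j).
Let vv j : R[i] := SC * uu j.
Let K : R[i] := (S + S^-1)%:C.

Lemma S0 : S != 0. Proof. by rewrite gt_eqF // (lt_trans ltr01). Qed.
Lemma SC0 : SC != 0. Proof. by rewrite /SC eq_complex /= eqxx andbT S0. Qed.
Lemma SpSV : 0 < S + S^-1.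
Proof. have h : 0 < S by rewrite (lt_trans ltr01). by rewrite addr_gt0 // invr_gt0. Qed.
Lemma K0 : K != 0. Proof. by rewrite /K eq_complex /= eqxx andbT gt_eqF // SpSV. Qed.
Lemma vv0 j : vv j != 0. Proof. by rewrite mulf_neq0 ?SC0 ?expi_neq0. Qed.

Lemma znodeE j : znode m S j = (vv j + (vv j)^-1) / K.
Proof. by rewrite /znode expiN fmorphV /vv invfM. Qed.

Lemma wnodeE j : wnode m S j = ((2 * m)%:R)^-1 * ((vv j - (vv j)^-1) / K).
Proof. by rewrite /wnode expiN !fmorphV rmorph_nat /vv invfM. Qed.

Lemma czE j : ((S + S^-1) / 2%:R)%:C * znode m S j = (vv j + (vv j)^-1) / 2%:R.
Proof.
have cE : ((S + S^-1) / 2%:R)%:C = K / 2%:R by rewrite /K rmorphM fmorphV rmorph_nat.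
rewrite znodeE cE.
have := K0; have := vv0 j; move: (vv j) K => v k h1 h2.
field; by rewrite h1 h2.
Qed.

Lemma vv2m j : vv j ^+ (2 * m) = - (S ^+ (2 * m))%:C.
Proof.
rewrite /vv exprMn rmorphXn /uu expiX.
have -> : ((2 * m)%:R * theta R m j : R) = (2 * j + 1)%:R * pi.
  rewrite /theta; have : ((2 * m)%:R : R) != 0 by rewrite pnatr_eq0 muln_eq0 /= -lt0n.
  move: (pi : R) => p h; field; by rewrite pnatr_eq0 -lt0n.
by rewrite -expiX expipi -signr_odd oddD oddM /= expr1 mulrN1.
Qed.

Lemma rexpi_contra (r t : R) : 1 < r -> (r%:C * expi t) != 1.
Proof.
move=> r1; apply/negP => /eqP /rexpi1 h.
have : 1 < r ^+ 2 by rewrite expr_gt1 // (le_trans ler01) ?ltW.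
by rewrite h ltxx.
Qed.

Lemma S2gt1 : 1 < S ^+ 2.
Proof. by rewrite expr_gt1 // (le_trans ler01) ?ltW. Qed.

Lemma vvd0 j : vv j - (vv j)^-1 != 0.
Proof.
apply/negP => /eqP h.
have : vv j * vv j = 1.
  by rewrite -{2}(subr0 (vv j)) -h opprB addrC subrK mulfV // vv0.
apply/eqP.
have -> : vv j * vv j = (S ^+ 2)%:C * expi (2%:R * theta R m j).
  rewrite -expiX /vv /uu /SC rmorphXn; ring.
exact: rexpi_contra S2gt1.
Qed.

Lemma znode_neq i k : (i < k < 2 * m)%N -> znode m S i != znode m S k.
Proof.
case/andP=> ik k2m.
rewrite !znodeE; apply/negP => /eqP h.
have e : vv i + (vv i)^-1 = vv k + (vv k)^-1.
  by move/(congr1 (fun x => x * K)): h; rewrite !divfK ?K0.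
have f : (vv i - vv k) * (1 - (vv i * vv k)^-1) = 0.
  have : (vv i + (vv i)^-1) - (vv k + (vv k)^-1) = 0 by rewrite e subrr.
  have := vv0 i; have := vv0 k; move: (vv i) (vv k) => a b hb ha <-.
  field; by rewrite ha hb.
move/eqP: f; rewrite mulf_eq0 => /orP [|].
- rewrite subr_eq0 => /eqP /(mulfI SC0) hu.
  have : expi (pi * (k - i)%:R / m%:R : R) == 1.
    apply/eqP; have hx := @expi_neq0 R (theta R m i).
    suff H : expi (theta R m i) * expi (pi * (k - i)%:R / m%:R) = expi (theta R m i) * 1.
      exact: (mulfI hx H).
    rewrite mulr1 -expiD; move: hu; rewrite /uu => ->; congr expi.
    rewrite /theta natrB; last exact: ltnW.
    have : (m%:R : R) != 0 by rewrite pnatr_eq0 -lt0n.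
    move: (pi : R) => p hm; rewrite ?natrD ?natrM; field; rewrite hm -natrD pnatr_eq0 andbT; by case: (m) m1.
  apply/negP; apply: (@omega_neq1 R).
  rewrite subn_gt0 ik /=; apply: leq_ltn_trans k2m; exact: leq_subr.
- rewrite subr_eq0 eq_sym => /eqP h1.
  have h2 : vv i * vv k = 1.
    by rewrite -[vv i * vv k]invrK h1 invr1.
  move: h2; apply/eqP.
  have -> : vv i * vv k = (S ^+ 2)%:C * expi (theta R m i + theta R m k).
    by rewrite expiD /vv /uu /SC rmorphXn; ring.
  exact: rexpi_contra S2gt1.
Qed.

Lemma znode_inj i k : (i < 2 * m)%N -> (k < 2 * m)%N -> znode m S i = znode m S k -> i = k.
Proof.
move=> hi hk h; case: (ltngtP i k) => // hik.
- by move: (znode_neq i k); rewrite hik hk h eqxx => /(_ isT).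
- by move: (znode_neq k i); rewrite hik hi h eqxx => /(_ isT).
Qed.

Let a := alphaT m S.
Let b := betaT m S.
Let c := (S + S^-1) / 2.
Let s := S ^+ (2 * m).
Let sC : R[i] := s%:C.

Lemma s_gt1 : 1 < s.
Proof.
rewrite /s expr_gt1 //; first by rewrite muln_gt0.
by rewrite ltW // (lt_trans ltr01).
Qed.

Lemma s_d0 : 0 < s - s^-1.
Proof.
have s1 := s_gt1; have s0 : 0 < s by rewrite (lt_trans ltr01).
rewrite subr_gt0 (lt_trans _ s1) // invf_lt1 //.
Qed.

Lemma sC0 : sC != 0.
Proof. by rewrite /sC eq_complex /= eqxx andbT gt_eqF // (lt_trans ltr01) // s_gt1. Qed.

Lemma sCd0 : sC * sC - 1 != 0.
Proof.
have -> : sC * sC - 1 = (s * s - 1)%:C by rewrite /sC rmorphB rmorphM rmorph1.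
rewrite eq_complex /= eqxx andbT subr_eq0.
rewrite gt_eqF // -expr2 expr_gt1 // ?s_gt1 //.
by rewrite ltW // (lt_trans ltr01) // s_gt1.
Qed.

Lemma aC : a%:C = (sC + sC^-1) / (sC - sC^-1).
Proof. by rewrite /a /alphaT rmorphM fmorphV rmorphD rmorphB fmorphV. Qed.

Lemma bC : b%:C = 2%:R / (sC - sC^-1).
Proof. by rewrite /b /betaT rmorphM fmorphV rmorphB fmorphV rmorph_nat. Qed.

Lemma cC : c%:C = K / 2%:R.
Proof. by rewrite /K /c rmorphM fmorphV rmorph_nat. Qed.

Definition Qp : {poly R[i]} := b%:C *: (cheb _ (2 * m) \Po (c%:C *: 'X)) + (a%:C)%:P.

Lemma QE z : Qp.[z] = a%:C + b%:C * (cheb _ (2 * m)).[c%:C * z].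
Proof. by rewrite /Qp hornerD hornerZ horner_comp hornerZ hornerX hornerC addrC. Qed.

Lemma Q_node j : Qp.[znode m S j] = 0.
Proof.
rewrite QE czE cheb_J ?vv0 // vv2m aC bC -/s -/sC.
have := sC0; have := sCd0; move: sC => t h1 h2.
field; by rewrite h1 h2.
Qed.

Lemma dQE z : Qp^`().[z] = b%:C * ((cheb _ (2 * m))^`().[c%:C * z] * c%:C).
Proof.
rewrite /Qp derivD derivC addr0 derivZ deriv_comp derivZ derivX hornerZ hornerM.
by rewrite horner_comp !hornerZ hornerX ?horner1 ?hornerC mulr1.
Qed.

Lemma wdQ j : wnode m S j * Qp^`().[znode m S j] = -1.
Proof.
rewrite dQE czE cheb_dJ ?vv0 ?vvd0 // wnodeE bC cC.
have := vv2m j; have := vv0 j; have := vvd0 j; have := K0; have := sC0; have := sCd0.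
rewrite -/s -/sC.
move: (vv j) K sC => v k t h1 h2 h3 h4 h5 h6.
rewrite -[v ^+ (2 * m)]/(v ^+ (2 * m)) h6.
have hm : ((2 * m)%:R : R[i]) != 0 by rewrite pnatr_eq0 muln_eq0 /= -lt0n.
have hv : v * v - 1 != 0.
  move: h4; apply: contra => /eqP h; apply/eqP.
  have -> : v - v^-1 = (v * v - 1) / v by field.
  by rewrite h mul0r.
have hm' : (m%:R : R[i]) != 0 by rewrite pnatr_eq0 -lt0n.
field; by rewrite hv h5 h2 h1 h3 hm'.
Qed.

Lemma bC0 : b%:C != 0.
Proof.
rewrite bC mulf_neq0 ?pnatr_eq0 // invr_eq0.
have := sC0; have := sCd0; move: sC => t h1 h2.
apply: contra h1 => /eqP h; apply/eqP.
have -> : t * t - 1 = (t - t^-1) * t by field.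
by rewrite h mul0r.
Qed.

Lemma cC0 : c%:C != 0.
Proof. by rewrite cC mulf_neq0 ?K0 // invr_eq0 pnatr_eq0. Qed.

Lemma Q_size : size Qp = (2 * m).+1.
Proof.
rewrite /Qp size_addl size_scale ?bC0 // size_comp_poly2 ?size_cheb //.
all: try by rewrite size_scale ?cC0 // size_polyX.
all: by apply: (leq_ltn_trans (size_polyC_leq1 _)); rewrite ltnS muln_gt0 m1.
Qed.

Lemma Q_neq0 : Qp != 0.
Proof. by rewrite -size_poly_eq0 Q_size. Qed.

Let Pj j := Qp %/ ('X - (znode m S j)%:P).

Lemma PjK j : Pj j * ('X - (znode m S j)%:P) = Qp.
Proof. by rewrite divpK // dvdp_XsubCl rootE Q_node. Qed.

Lemma Pj_size j : size (Pj j) = (2 * m)%N.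
Proof. by rewrite size_divp ?size_XsubC ?Q_size ?subn1 // -size_poly_eq0 size_XsubC. Qed.

Lemma Pj_at j z : z != znode m S j -> (Pj j).[z] = Qp.[z] / (z - znode m S j).
Proof.
move=> hz; by rewrite -(PjK j) hornerM hornerXsubC mulfK // subr_eq0.
Qed.

Lemma Pj_self j : (Pj j).[znode m S j] = Qp^`().[znode m S j].
Proof.
by rewrite -(PjK j) derivM derivXsubC hornerD !hornerM hornerXsubC subrr mulr0 add0r hornerC mulr1.
Qed.

Lemma G0 : \sum_(j < 2 * m) wnode m S j *: Pj j = -1.
Proof.
set G := \sum_(j < 2 * m) wnode m S j *: Pj j.
apply/eqP; rewrite -subr_eq0 opprK; apply/negPn/negP => nz.
pose rs := [seq znode m S j | j <- iota 0 (2 * m)].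
have := @max_poly_roots _ (G + 1) rs nz.
have -> : all (root (G + 1)) rs.
  apply/allP => x /mapP [j]; rewrite mem_iota add0n /= => hj ->.
  rewrite rootE hornerD horner_sum hornerC (bigD1 (Ordinal hj)) //= hornerZ Pj_self wdQ.
  rewrite big1 ?addr0 ?addNr // => k hk.
  rewrite hornerZ Pj_at ?Q_node ?mul0r ?mulr0 //.
  apply/negP => /eqP /znode_inj h.
  by move: hk; rewrite -val_eqE /= -h ?eqxx.
have -> : uniq rs.
  rewrite map_inj_in_uniq ?iota_uniq // => i k; rewrite !mem_iota !add0n /=.
  by move=> hi hk; apply: znode_inj.
move=> /(_ isT isT); rewrite size_map size_iota.
apply/negP; rewrite -leqNgt (leq_trans (size_polyD _ _)) // geq_max size_poly1 /=.
apply/andP; split; last by rewrite muln_gt0 m1.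
rewrite /G; apply: (big_ind (fun p : {poly R[i]} => size p <= 2 * m)%N).
- by rewrite size_poly0.
- by move=> p q hp hq; rewrite (leq_trans (size_polyD _ _)) // geq_max hp hq.
- by move=> j _; rewrite (leq_trans (size_scale_leq _ _)) // Pj_size.
Qed.

Lemma rT_Q z : not_node m S z -> rT m S z * Qp.[z] = 1.
Proof.
move=> hz; rewrite /rT mulr_suml.
have -> : \sum_(j < 2 * m) wnode m S j / (znode m S j - z) * Qp.[z] =
          - (\sum_(j < 2 * m) wnode m S j *: Pj j).[z].
  rewrite horner_sum -sumrN; apply: eq_bigr => j _; rewrite hornerZ Pj_at; last first.
    by apply/eqP => e; apply: (hz j (ltn_ord j)).
  have hd : z - znode m S j != 0 by rewrite subr_eq0; apply/eqP => e; apply: (hz j (ltn_ord j)).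
  have hd' : znode m S j - z != 0 by rewrite -opprB oppr_eq0.
  move: (wnode m S j) (znode m S j) (Qp.[z]) hd hd' => w y q hd hd'.
  field; by rewrite hd hd'.
by rewrite G0 hornerN hornerC opprK.
Qed.

Lemma Q_nn z : Qp.[z] != 0 -> not_node m S z.
Proof. by move=> h j hj e; move: h; rewrite e Q_node eqxx. Qed.

Lemma b_gt0 : 0 < b.
Proof. by rewrite /b /betaT divr_gt0 // -/s ?s_d0. Qed.

Lemma amb_gt0 : 0 < a - b.
Proof.
rewrite /a /b /alphaT /betaT -/s.
have := s_gt1; have := s_d0; move: s => t h1 h2.
have t0 : 0 < t by rewrite (lt_trans ltr01).
rewrite -mulrBl divr_gt0 //.
have -> : t + t^-1 - 2%:R = (t - 1) ^+ 2 / t by field; rewrite gt_eqF.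
by rewrite divr_gt0 // exprn_gt0 // subr_gt0.
Qed.
End Nodes.

Lemma cheb2 (R : realType) (y : R[i]) n :
  (cheb _ (2 * n)).[y] = 2%:R * (cheb _ n).[y] ^+ 2 - 1.
Proof.
have hs := sqr_sqrtc (y ^+ 2 - 1).
move: (sqrtc _) hs => q hs.
have e : (y + q) * (y - q) = 1.
  have -> : (y + q) * (y - q) = y ^+ 2 - q ^+ 2 by ring.
  by rewrite hs opprB addrC subrK.
have v0 : y + q != 0 by apply: contra_eq_neq e => ->; rewrite mul0r eq_sym oner_neq0.
have vi : (y + q)^-1 = y - q.
  suff H : (y + q) * (y + q)^-1 = (y + q) * (y - q) by exact: (mulfI v0 H).
  by rewrite mulfV // e.
have ye : y = ((y + q) + (y + q)^-1) / 2%:R.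
  rewrite vi; have h2 : (2%:R : R[i]) != 0 by rewrite pnatr_eq0.
  by field.
rewrite ye !cheb_J // mulnC exprM.
have := expf_neq0 n v0; move: (_ ^+ n) => w hw.
have h2 : (2%:R : R[i]) != 0 by rewrite pnatr_eq0.
by field.
Qed.

Lemma cheb_cos (R : realType) (x : R) n : -1 <= x <= 1 ->
  (cheb _ n).[x%:C] = (cos (n%:R * acos x))%:C.
Proof.
move=> hx.
have h2 : (2%:R : R[i]) != 0 by rewrite pnatr_eq0.
have xe : x%:C = (expi (acos x) + (expi (acos x))^-1) / 2%:R.
  rewrite -expiN expi_re acosK; last by rewrite in_itv.
  by rewrite rmorphM rmorph_nat mulrC mulKf.
rewrite xe cheb_J ?expi_neq0 // expiX -expiN expi_re rmorphM rmorph_nat.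
by rewrite mulrC mulKf.
Qed.

Lemma cheb_alt (R : realType) (m k : nat) : (0 < m)%N ->
  (cheb _ (2 * m)).[(- cos (pi * k%:R / (2 * m)%:R : R))%:C] = (-1) ^+ k :> R[i].
Proof.
move=> m0.
set t : R := pi * k%:R / (2 * m)%:R.
have h2 : (2%:R : R[i]) != 0 by rewrite pnatr_eq0.
have v0 : - expi t != 0 by rewrite oppr_eq0 expi_neq0.
have xe : (- cos t)%:C = (- expi t + (- expi t)^-1) / 2%:R.
  rewrite invrN -expiN -opprD expi_re rmorphN rmorphM rmorph_nat.
  by rewrite mulNr mulrC mulKf.
have e : (- expi t) ^+ (2 * m) = expi t ^+ (2 * m) by rewrite !exprM sqrrN.
rewrite xe cheb_J // e expiX.
have -> : (2 * m)%:R * t = k%:R * pi.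
  rewrite /t; have : ((2 * m)%:R : R) != 0 by rewrite pnatr_eq0 muln_eq0 /= -lt0n.
  move: (pi : R) => p h; field; by rewrite pnatr_eq0 -lt0n.
rewrite -expiX expipi -exprVn invrN1.
move: ((-1) ^+ k) => w; by field.
Qed.

Theorem lemma3p1 (R : realType) (m : nat) (S : R) :
  (1 <= m)%N -> 1 < S ->
  let a := alphaT m S in
  let b := betaT m S in
  let c := (S + S^-1) / 2 in
  (forall z : R[i], not_node m S z ->
     a%:C + b%:C * (cheb _ (2 * m)).[c%:C * z] != 0 /\
     rT m S z = (a%:C + b%:C * (cheb _ (2 * m)).[c%:C * z])^-1 /\
     rT m S z = ((a - b)%:C + 2%:R * b%:C * ((cheb _ m).[c%:C * z]) ^+ 2)^-1) /\
  exact_type 0 (2 * m) (rT m S) (not_node m S) /\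
  (forall x : R, - (2 / (S + S^-1)) <= x <= 2 / (S + S^-1) ->
     exists y : R, rT m S x%:C = y%:C /\ (a + b)^-1 <= y <= (a - b)^-1) /\
  (exists x : nat -> R,
     (forall k, (k < 2 * m)%N -> x k < x k.+1) /\
     (forall k, (k <= 2 * m)%N ->
        - (2 / (S + S^-1)) <= x k <= 2 / (S + S^-1) /\
        (rT m S (x k)%:C = ((a + b)^-1)%:C \/ rT m S (x k)%:C = ((a - b)^-1)%:C)) /\
     (forall k, (k < 2 * m)%N -> rT m S (x k)%:C <> rT m S (x k.+1)%:C)).
Proof.
move=> m1 S1 a b c.
have QEz := QE R m S.
have rTE : forall z, (Qp R m S).[z] != 0 -> rT m S z = (Qp R m S).[z]^-1.
  move=> z hz; have := rT_Q _ _ _ m1 S1 _ (Q_nn _ _ _ m1 S1 _ hz) => h.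
  by apply: (mulIf hz); rewrite h mulVf.
have bp : 0 < b := b_gt0 _ _ _ m1 S1.
have abp : 0 < a - b := amb_gt0 _ _ _ m1 S1.
have cp : 0 < c by apply: divr_gt0; [exact: (SpSV _ _ S1) | ].
have cinv : 2 / (S + S^-1) = c^-1 by rewrite /c invf_div.
split.
  move=> z hz; have h := rT_Q _ _ _ m1 S1 _ hz.
  have Q0 : (Qp R m S).[z] != 0 by apply: contra_eq_neq h => ->; rewrite mulr0 eq_sym oner_neq0.
  rewrite -QEz; split=> //; split; first by rewrite rTE.
  rewrite rTE // QEz cheb2 rmorphB; congr (_^-1); ring.
split.
  exists 1, (Qp R m S); split.
  - by rewrite size_poly1.
  - exact: (Q_size _ _ _ m1 S1).
  - exact: coprime1p.
  move=> z hz; have h := rT_Q _ _ _ m1 S1 _ hz.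
  have Q0 : (Qp R m S).[z] != 0 by apply: contra_eq_neq h => ->; rewrite mulr0 eq_sym oner_neq0.
  by split=> //; rewrite hornerC mul1r rTE.
split.
  move=> x; rewrite cinv => hx.
  have hy : -1 <= c * x <= 1.
    case/andP: hx => h1 h2; apply/andP; split.
      by rewrite -(mulfV (negbT (gt_eqF cp))) -mulrN ler_pM2l.
    by rewrite -(mulfV (negbT (gt_eqF cp))) ler_pM2l.
  set g := cos ((2 * m)%:R * acos (c * x)).
  have gQ : (Qp R m S).[x%:C] = (a + b * g)%:C.
    by rewrite QEz -rmorphM (cheb_cos _ _ _ hy) -rmorphM -rmorphD.
  have g1 : -1 <= g by apply: cos_geN1.
  have g2 : g <= 1 by apply: cos_le1.
  have h1 : 0 <= b * (g + 1) by apply: mulr_ge0; [exact: ltW | lra].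
  have h2 : 0 <= b * (1 - g) by apply: mulr_ge0; [exact: ltW | lra].
  rewrite mulrDr mulr1 in h1; rewrite mulrBr mulr1 in h2.
  have pos : 0 < a + b * g by lra.
  exists (a + b * g)^-1; split.
    by rewrite rTE gQ ?fmorphV // eq_complex /= eqxx andbT gt_eqF.
  rewrite !lef_pV2 ?posrE //; try lra.
pose xk k := - (cos (pi * k%:R / (2 * m)%:R) * c^-1).
have cx : forall k, c%:C * (xk k)%:C = (- cos (pi * k%:R / (2 * m)%:R))%:C.
  by move=> k; rewrite -rmorphM /xk mulrN mulrCA mulfV ?mulr1 // gt_eqF.
have apb : 0 < a + b by lra.
have rk : forall k, rT m S (xk k)%:C = ((if odd k then a - b else a + b)^-1)%:C.
  move=> k.
  have e : (Qp R m S).[(xk k)%:C] = (if odd k then a - b else a + b)%:C.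
    rewrite QEz cx cheb_alt // -signr_odd; case: (odd k).
      by rewrite expr1 mulrN1 rmorphB.
    by rewrite expr0 mulr1 rmorphD.
  rewrite rTE e ?fmorphV //; case: (odd k); rewrite eq_complex /= eqxx andbT gt_eqF //.
have M0 : (0 : R) < (2 * m)%:R by rewrite ltr0n muln_gt0 m1.
have tin : forall k : nat, (k <= 2 * m)%N -> (pi * k%:R / (2 * m)%:R : R) \in `[0, (pi : R)].
  move=> k hk; rewrite in_itv /=; apply/andP; split.
    by rewrite divr_ge0 ?mulr_ge0 ?pi_ge0 ?ler0n // ltW.
  rewrite ler_pdivrMr // ler_pM2l ?pi_gt0 // ler_nat //.
have Cp : 0 < c^-1 by rewrite invr_gt0.
exists xk; split; [|split].
- move=> k hk; rewrite /xk ltrN2 ltr_pM2r // ltr_cos ?tin //; last exact: ltnW.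
  by rewrite ltr_pM2r ?invr_gt0 // ltr_pM2l ?pi_gt0 // ltr_nat.
- move=> k hk; split.
    rewrite cinv /xk.
    set co := cos _.
    have c1 : -1 <= co by apply: cos_geN1.
    have c2 : co <= 1 by apply: cos_le1.
    have h1 : 0 <= c^-1 * (co + 1) by apply: mulr_ge0; [exact: ltW | lra].
    have h2 : 0 <= c^-1 * (1 - co) by apply: mulr_ge0; [exact: ltW | lra].
    rewrite mulrDr mulr1 in h1; rewrite mulrBr mulr1 in h2.
    rewrite [co * _]mulrC; apply/andP; split; lra.
  by rewrite rk; case: (odd k); [right|left].
- move=> k hk; rewrite !rk /=; case: (odd k) => /= -[] /invr_inj; lra.
Qed.
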